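(* Let $\varphi:\mathfrak{h}\to V^*$ be a complex factorization structure and $i,j\in\{1,\ldots,m\}$. The factorization curves $\psi_i$ and $\psi_j$ have the same image if and only if there exists an invertible projective transformation $\Phi_{ji}:\mathbb{P}(V_i)\to\mathbb{P}(V_j)$ such that $\psi_i(\ell)=\psi_j(\Phi_{ji}(\ell))$ for all $\ell\in\mathbb{P}(V_i)$.
   Context: $V_1,\ldots,V_m$ are 2-dimensional complex vector spaces, $V^*=V_1^*\otimes\cdots\otimes V_m^*$, $\Sigma^0_{j,\ell}=V_1^*\otimes\cdots\otimes\ell^0\otimes\cdots\otimes V_m^*$ ($\ell^0$ the annihilator of $\ell$, in slot $j$). A factorization structure of dimension $m$ is an injective linear map $\varphi:\mathfrak{h}\to V^*$, $\dim\mathfrak{h}=m+1$, with $\dim(\varphi(\mathfrak{h})\cap\Sigma^0_{j,\ell})=1$ for all $j$ and all $\ell$ in a nonempty Zariski-open subset of $\mathbb{P}(V_j)$. The $j$-th factorization curve $\psi_j:\mathbb{P}(V_j)\to\mathbb{P}(\mathfrak{h})$ is the unique regular extension to $\mathbb{P}(V_j)$ of the generically defined regular map $\ell\mapsto\varphi^{-1}(\varphi(\mathfrak{h})\cap\Sigma^0_{j,\ell})$. *)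

(* Defs.v *)
From mathcomp Require Import all_boot all_algebra.
From mathcomp Require Import complex.
From mathcomp Require Import Rstruct.
From Stdlib Require Import Reals.
Set Implicit Arguments.
Unset Strict Implicit.
Unset Printing Implicit Defensive.
Import GRing.Theory.
Local Open Scope ring_scope.

Definition CC : closedFieldType := complex R.

(* Coordinates: V_j = CC^2 (row vectors 'rV_2), V_j^* = CC^2 with the dual
   basis; V^* = V_1^* (x) ... (x) V_m^* is the space of tensors, i.e. of
   arrays indexed by multi-indices s : 'I_m -> 'I_2 (coordinates in the
   tensor product of the dual bases). *)
Definition multi_index (m : nat) := {ffun 'I_m -> 'I_2}.
Definition tensor (m : nat) := {ffun multi_index m -> CC}.

Definition tens_eval (m : nat) (T : tensor m) (v : 'I_m -> 'rV[CC]_2) : CC :=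
  \sum_(s : multi_index m) T s * \prod_(k < m) v k 0 (s k).

(* Sigma^0_{j,l} = V_1^* (x) ... (x) l^0 (x) ... (x) V_m^*, for the line
   l = span(u) in V_j: it consists of the multilinear forms that vanish
   whenever the j-th argument lies in l (l^0 = forms vanishing on l). *)
Definition inSigma0 (m : nat) (j : 'I_m) (u : 'rV[CC]_2) (T : tensor m) : Prop :=
  forall v : 'I_m -> 'rV[CC]_2, (exists c : CC, v j = c *: u) -> tens_eval T v = 0.

(* h = CC^(m+1) (row vectors); phi : h -> V^* linear, given by the images
   of the standard basis vectors. *)
Definition phi_map (m : nat) (B : 'I_m.+1 -> tensor m) (x : 'rV[CC]_m.+1) : tensor m :=
  \sum_(k < m.+1) x 0 k *: B k.

Definition same_point (n : nat) (x y : 'rV[CC]_n) : Prop :=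
  x != 0 /\ exists c : CC, c != 0 /\ y = c *: x.

(* Homogeneous polynomial of degree d in the two coordinates of V_j, given
   by its coefficients; every homogeneous form of degree d is of this form. *)
Definition hform (d : nat) (c : 'I_d.+1 -> CC) (u : 'rV[CC]_2) : CC :=
  \sum_(k < d.+1) c k * u 0 0 ^+ k * u 0 1 ^+ (d - k).

Definition hvec (n d : nat) (f : 'I_n -> 'I_d.+1 -> CC) (u : 'rV[CC]_2) : 'rV[CC]_n :=
  \row_(k < n) hform (f k) u.

(* P holds on a nonempty Zariski-open subset of P^1 = P(CC^2).  Basic open
   sets D(g) (g a homogeneous form) form a basis of the Zariski topology, so
   this is: P holds on some nonempty D(g). *)
Definition generic_P1 (P : 'rV[CC]_2 -> Prop) : Prop :=
  exists (e : nat) (g : 'I_e.+1 -> CC),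
    (exists u : 'rV[CC]_2, u != 0 /\ hform g u != 0) /\
    forall u : 'rV[CC]_2, u != 0 -> hform g u != 0 -> P u.

(* A regular map P^1 -> P^(n-1), represented on nonzero representatives:
   locally (on an open neighbourhood D(g) of each point p) it is given by
   homogeneous polynomials of a common degree without common zero there. *)
Definition regular_P1 (n : nat) (psi : 'rV[CC]_2 -> 'rV[CC]_n) : Prop :=
  forall p : 'rV[CC]_2, p != 0 ->
    exists (d : nat) (f : 'I_n -> 'I_d.+1 -> CC) (e : nat) (g : 'I_e.+1 -> CC),
      hform g p != 0 /\
      forall u : 'rV[CC]_2, u != 0 -> hform g u != 0 ->
        hvec f u != 0 /\ same_point (hvec f u) (psi u).

Definition factorization_structure (m : nat) (B : 'I_m.+1 -> tensor m) : Prop :=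
  (forall x : 'rV[CC]_m.+1, phi_map B x = 0 -> x = 0) /\
  forall j : 'I_m, generic_P1 (fun u =>
    (* dim (phi(h) /\ Sigma^0_{j,[u]}) = 1 *)
    exists T0 : tensor m, T0 != 0 /\
      forall T : tensor m,
        ((exists x, T = phi_map B x) /\ inSigma0 j u T) <-> exists c : CC, T = c *: T0).

(* psi is the j-th factorization curve: the regular map P(V_j) -> P(h)
   extending l |-> phi^{-1}(phi(h) /\ Sigma^0_{j,l}) from a nonempty
   Zariski-open set (such an extension is unique). *)
Definition factorization_curve (m : nat) (B : 'I_m.+1 -> tensor m) (j : 'I_m)
    (psi : 'rV[CC]_2 -> 'rV[CC]_m.+1) : Prop :=
  regular_P1 psi /\
  generic_P1 (fun u =>
    forall x : 'rV[CC]_m.+1, inSigma0 j u (phi_map B x) <-> exists c : CC, x = c *: psi u).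

Definition same_image (n : nat) (psi1 psi2 : 'rV[CC]_2 -> 'rV[CC]_n) : Prop :=
  (forall u, u != 0 -> exists u', u' != 0 /\ same_point (psi1 u) (psi2 u')) /\
  (forall u', u' != 0 -> exists u, u != 0 /\ same_point (psi1 u) (psi2 u')).

(* Main.v *)
Require Import Defs.
From mathcomp Require Import all_boot all_algebra.
From mathcomp Require Import complex Rstruct ring.
From Stdlib Require Import Classical.
Import GRing.Theory Num.Theory.
Set Implicit Arguments. Unset Strict Implicit. Unset Printing Implicit Defensive.
Local Open Scope ring_scope.
Lemma natinjCC (a b : nat) : (a%:R : CC) = b%:R -> a = b.
Proof. by move/eqP; rewrite eqr_nat => /eqP. Qed.

Lemma avoid (s : seq CC) : exists c : CC, c \notin s.
Proof.
set l := map (fun n : nat => (n%:R : CC)) (iota 0 (size s).+1).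
have ul : uniq l.
  rewrite map_inj_uniq ?iota_uniq //; by move=> x y /natinjCC.
case: (boolP (all (fun x => x \in s) l)) => [/allP H|].
  have := uniq_leq_size ul H; by rewrite size_map size_iota ltnn.
by move/allPn => [x _ Hx]; exists x.
Qed.

Lemma avoid2 (s : seq CC) : exists t1 t2, t1 \notin s /\ t2 \notin s /\ t1 != t2.
Proof.
have [t1 H1] := avoid s; have [t2 H2] := avoid (t1 :: s).
exists t1, t2; move: H2; rewrite inE negb_or => /andP[H3 H4].
by rewrite H1 H4 eq_sym H3.
Qed.

Lemma deriv0_const (p : {poly CC}) : p^`() = 0 -> p = (p`_0)%:P.
Proof.
move=> H; apply/polyP => i; rewrite coefC.
case: i => [//|i].
have : (p^`())`_i = 0 by rewrite H coef0.
rewrite coef_deriv => /eqP; rewrite mulrn_eq0 /= => /eqP ->; done.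
Qed.

Lemma two_roots (g : {poly CC}) : (2 < size g)%N ->
  exists t1 t2, root g t1 /\ root g t2 /\ (t1 != t2 \/ root g^`() t1).
Proof.
move=> Hs.
have /closed_rootP [t1 Ht1] : size g != 1 by rewrite neq_ltn (ltnW Hs) orbT.
have /factor_theorem [h Hh] := Ht1.
have hn0 : h != 0 by apply/negP => /eqP h0; move: Hs; rewrite Hh h0 mul0r size_poly0.
have Hsh : (1 < size h)%N.
  move: Hs; rewrite Hh size_mul ?polyXsubC_eq0 // size_XsubC addn2 /=; done.
have /closed_rootP [t2 Ht2] : size h != 1 by rewrite neq_ltn Hsh orbT.
exists t1, t2; split => //; split.
  by rewrite Hh rootM Ht2.
case: (eqVneq t1 t2) => [E|]; [right|by left].
have /factor_theorem [h2 Hh2] := Ht2.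
rewrite Hh Hh2 /root !derivM !hornerE -E subrr; apply/eqP; ring.
Qed.

Lemma deg_lemma (a b : {poly CC}) (s : seq CC) :
  coprimep a b ->
  (forall t1 t2, t1 \notin s -> t2 \notin s ->
     a.[t1] * b.[t2] = a.[t2] * b.[t1] -> t1 = t2) ->
  (size a <= 2)%N /\ (size b <= 2)%N /\ a`_0 * b`_1 - a`_1 * b`_0 != 0.
Proof.
move=> cop Hinj.
have [u1 [u2 [Hu1 [Hu2 Hu12]]]] := avoid2 s.
have noroot t : b.[t] = 0 -> a.[t] != 0.
  move=> bt; apply/negP => at0.
  by have := coprimep_root cop at0; rewrite bt eqxx.
pose W := a^`() * b - a * b^`().
have Wn0 : W != 0.
  apply/negP => /eqP W0.
  have E : a^`() * b = a * b^`() by apply/eqP; rewrite -subr_eq0 -/W W0.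
  have da : a^`() = 0.
    apply/eqP/negPn/negP => dn0.
    have an0 : a != 0 by apply/negP => /eqP a0; move: dn0; rewrite a0 deriv0 eqxx.
    have : a %| a^`().
      by rewrite -(Gauss_dvdpl _ cop) E dvdp_mulr.
        move/(dvdp_leq dn0); by rewrite leqNgt lt_size_deriv.
  have db : b^`() = 0.
    apply/eqP/negPn/negP => dn0.
    have bn0 : b != 0 by apply/negP => /eqP b0; move: dn0; rewrite b0 deriv0 eqxx.
    have : b %| b^`().
      have cop' : coprimep b a by rewrite coprimep_sym.
      by rewrite -(Gauss_dvdpr _ cop') -E dvdp_mull.
        move/(dvdp_leq dn0); by rewrite leqNgt lt_size_deriv.
  rewrite (deriv0_const da) (deriv0_const db) in Hinj.
  by move/eqP: Hu12; apply; apply: Hinj => //; rewrite !hornerC.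
have [rw Hrw] := closed_field_poly_normal W.
have Wroot t : root W t -> t \in rw.
  rewrite Hrw rootZ ?root_prod_XsubC // lead_coef_eq0 //.
pose n := maxn (size a) (size b).
have small : (n <= 2)%N.
  rewrite leqNgt; apply/negP => Hn.
  have Hab : (a`_n.-1 != 0) || (b`_n.-1 != 0).
    rewrite /n; case: (leqP (size a) (size b)) => Hl.
      rewrite -lead_coefE lead_coef_eq0 orbC; apply/orP; left.
      apply/negP => /eqP b0; move: Hn; rewrite /n (maxn_idPr Hl) b0 size_poly0 //.
    rewrite -lead_coefE lead_coef_eq0; apply/orP; left.
    apply/negP => /eqP a0; move: Hn; rewrite /n (maxn_idPl (ltnW Hl)) a0 size_poly0 //.
  pose bad := - a`_n.-1 / b`_n.-1 :: map (fun r => - a.[r] / b.[r]) (rw ++ s).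
  have [c Hc] := avoid bad.
  pose g := a + c *: b.
  have Hg : (2 < size g)%N.
    have : g`_n.-1 != 0.
      rewrite /g coefD coefZ.
      case: (eqVneq (b`_n.-1) 0) => [b0|b0].
        by rewrite b0 mulr0 addr0; move: Hab; rewrite b0 eqxx orbF.
      apply/negP => /eqP E.
      move: Hc; rewrite inE negb_or => /andP[Hc1 _]; move/negP: Hc1; apply.
      apply/eqP; rewrite -[c](mulfK b0); congr (_ / _).
      by apply/eqP; rewrite -subr_eq0 opprK addrC E.
    move=> H; apply: (leq_trans Hn); rewrite -(prednK (leq_ltn_trans (leq0n _) Hn)).
    by rewrite ltnNge; apply: contra H => H; rewrite nth_default.
  have rootc t : root g t -> (b.[t] != 0) /\ c = - a.[t] / b.[t].
    rewrite /root /g hornerD hornerZ => /eqP E.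
    have bt : b.[t] != 0.
      apply/negP => /eqP bt; move: E; rewrite bt mulr0 addr0 => at0.
      by move: (noroot t bt); rewrite at0 eqxx.
    split => //; rewrite -[c](mulfK bt); congr (_ / _).
    by apply/eqP; rewrite -subr_eq0 opprK addrC E.
  have notin t r : root g t -> t \in r -> - a.[t] / b.[t] \in map (fun r => - a.[r] / b.[r]) r.
    by move=> _ Ht; apply: map_f.
  have [t1 [t2 [R1 [R2 [D|D]]]]] := two_roots Hg.
    have [b1 c1] := rootc t1 R1; have [b2 c2] := rootc t2 R2.
    have t1s : t1 \notin s.
      apply/negP => H; move: Hc; rewrite inE negb_or map_cat mem_cat => /andP[_].
      by rewrite c1 (notin _ _ R1 H) orbT.
    have t2s : t2 \notin s.
      apply/negP => H; move: Hc; rewrite inE negb_or map_cat mem_cat => /andP[_].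
      by rewrite c2 (notin _ _ R2 H) orbT.
    move/eqP: D; apply; apply: Hinj => //.
    have e1 : a.[t1] = - c * b.[t1] by rewrite c1 mulNr divfK // opprK.
    have e2 : a.[t2] = - c * b.[t2] by rewrite c2 mulNr divfK // opprK.
    rewrite e1 e2; ring.
  have [b1 c1] := rootc t1 R1.
  have : root W t1.
    move: D R1; rewrite /g derivD derivZ /root /W !hornerE => /eqP D /eqP R1.
    have e1 : a.[t1] = - c * b.[t1] by rewrite c1 mulNr divfK // opprK.
    have e2 : a^`().[t1] = - c * b^`().[t1].
      by apply/eqP; rewrite -subr_eq0 mulNr opprK D.
    apply/eqP; rewrite e1 e2; ring.
  move/Wroot => H; move: Hc; rewrite inE negb_or map_cat mem_cat => /andP[_].
  by rewrite c1 (notin _ _ R1 H).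
have sa : (size a <= 2)%N by apply: leq_trans small; apply: leq_maxl.
have sb : (size b <= 2)%N by apply: leq_trans small; apply: leq_maxr.
split => //; split => //.
apply/negP => /eqP D; move/eqP: Hu12; apply; apply: Hinj => //.
rewrite !(horner_coef_wide _ sa) !(horner_coef_wide _ sb) !big_ord_recr !big_ord0 /=.
rewrite !expr0 !expr1 !add0r.
apply/eqP; rewrite -subr_eq0; apply/eqP.
transitivity ((a`_0 * b`_1 - a`_1 * b`_0) * (u2 - u1)); first ring.
by rewrite D mul0r.
Qed.

Lemma row2_eq (u v : 'rV[CC]_2) : u 0 0 = v 0 0 -> u 0 1 = v 0 1 -> u = v.
Proof.
move=> H0 H1; apply/rowP => k.
case: k => [[|[|k]]] Hk //.
- by have -> : Ordinal Hk = (0 : 'I_2) by apply/val_inj.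
- by have -> : Ordinal Hk = (1 : 'I_2) by apply/val_inj.
Qed.

Lemma row_neq0 (n : nat) (x : 'rV[CC]_n) : x != 0 -> exists a, x 0 a != 0.
Proof.
move=> H; apply: NNPP => N; move/eqP: H; apply; apply/rowP => k; rewrite mxE.
by apply: NNPP => N2; apply: N; exists k; apply/eqP.
Qed.

Lemma row2_neq0 (x : 'rV[CC]_2) : x != 0 -> x 0 0 != 0 \/ x 0 1 != 0.
Proof.
move=> H; case: (eqVneq (x 0 0) 0) => [h0|]; [right|by left].
apply/negP => /eqP h1; move/eqP: H; apply; apply: row2_eq; by rewrite mxE.
Qed.

Lemma sp_neq0l n (x y : 'rV[CC]_n) : same_point x y -> x != 0.
Proof. by case. Qed.

Lemma sp_neq0r n (x y : 'rV[CC]_n) : same_point x y -> y != 0.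
Proof.
move=> [xn0 [c [cn0 ->]]]; by rewrite scaler_eq0 negb_or cn0.
Qed.

Lemma sp_scale n (x : 'rV[CC]_n) c : x != 0 -> c != 0 -> same_point x (c *: x).
Proof. by move=> xn0 cn0; split => //; exists c. Qed.

Lemma sp_refl n (x : 'rV[CC]_n) : x != 0 -> same_point x x.
Proof. by move=> xn0; split => //; exists 1; rewrite oner_neq0 scale1r. Qed.

Lemma sp_sym n (x y : 'rV[CC]_n) : same_point x y -> same_point y x.
Proof.
move=> [xn0 [c [cn0 ->]]].
split; first by rewrite scaler_eq0 negb_or cn0.
exists (c^-1); rewrite invr_eq0 cn0 scalerA mulVf // scale1r //.
Qed.

Lemma sp_trans n (x y z : 'rV[CC]_n) :
  same_point x y -> same_point y z -> same_point x z.
Proof.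
move=> [xn0 [c [cn0 ->]]] [_ [d [dn0 ->]]].
split => //; exists (d * c); rewrite mulf_neq0 // scalerA //.
Qed.

Lemma sp_minor n (x y : 'rV[CC]_n) : same_point x y ->
  forall a b, x 0 a * y 0 b = x 0 b * y 0 a.
Proof. move=> [_ [c [_ ->]]] a b; rewrite !mxE; ring. Qed.

Lemma minor_sp n (x y : 'rV[CC]_n) : x != 0 -> y != 0 ->
  (forall a b, x 0 a * y 0 b = x 0 b * y 0 a) -> same_point x y.
Proof.
move=> xn0 yn0 M; have [a xa] := row_neq0 xn0.
have E : y = (y 0 a / x 0 a) *: x.
  apply/rowP => b; rewrite mxE; apply/(mulfI xa).
  rewrite M; field; done.
split => //; exists (y 0 a / x 0 a); split => //.
apply/negP => /eqP c0; move/eqP: yn0; apply; by rewrite E c0 scale0r.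
Qed.

Definition det2 (u w : 'rV[CC]_2) : CC := u 0 0 * w 0 1 - u 0 1 * w 0 0.

Lemma decomp (p w : 'rV[CC]_2) : det2 p w != 0 ->
  forall v, v = (det2 v w / det2 p w) *: p + (det2 p v / det2 p w) *: w.
Proof.
move=> D v; apply: row2_eq; rewrite !mxE /det2;
  apply/(mulfI D); rewrite /det2 in D; field; done.
Qed.

Lemma indep (p w : 'rV[CC]_2) a b : det2 p w != 0 ->
  a *: p + b *: w = 0 -> a = 0 /\ b = 0.
Proof.
move=> D E.
have E0 : (a *: p + b *: w) 0 0 = 0 by rewrite E mxE.
have E1 : (a *: p + b *: w) 0 1 = 0 by rewrite E mxE.
rewrite !mxE in E0 E1; rewrite /det2 in D; split.
  apply/(mulIf D); rewrite mul0r.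
  transitivity ((a * p 0 0 + b * w 0 0) * w 0 1 - (a * p 0 1 + b * w 0 1) * w 0 0); first ring.
  by rewrite E0 E1; ring.
apply/(mulIf D); rewrite mul0r.
transitivity ((a * p 0 1 + b * w 0 1) * p 0 0 - (a * p 0 0 + b * w 0 0) * p 0 1); first ring.
by rewrite E0 E1; ring.
Qed.

Lemma ord2_cases (k : 'I_2) : k = 0 \/ k = 1.
Proof.
case: k => [[|[|k]]] Hk //; [left|right]; by apply/val_inj.
Qed.

Lemma det_sp (u w : 'rV[CC]_2) : u != 0 -> w != 0 -> det2 u w = 0 -> same_point u w.
Proof.
move=> un0 wn0 D; apply: minor_sp => // a b.
have H : u 0 0 * w 0 1 = u 0 1 * w 0 0 by apply/eqP; rewrite -subr_eq0; apply/eqP.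
case: (ord2_cases a) => ->; case: (ord2_cases b) => -> //.
Qed.

Lemma exists_indep (p : 'rV[CC]_2) : p != 0 -> exists w, det2 p w != 0.
Proof.
move=> /row2_neq0 [H|H].
  exists (\row_k (k == 1)%:R); by rewrite /det2 !mxE /= mulr1 mulr0 subr0.
exists (\row_k (k == 0)%:R); by rewrite /det2 !mxE /= mulr1 mulr0 sub0r oppr_eq0.
Qed.

Definition upd m (v : 'I_m -> 'rV[CC]_2) (j : 'I_m) (x : 'rV[CC]_2) : 'I_m -> 'rV[CC]_2 :=
  fun k => if k == j then x else v k.

Lemma tens_upd m (T : tensor m) v j x : tens_eval T (upd v j x) =
  \sum_(s : multi_index m) T s * (x 0 (s j) * \prod_(k < m | k != j) v k 0 (s k)).
Proof.
apply: eq_bigr => s _; congr (_ * _).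
rewrite (bigD1 j) //= /upd eqxx; congr (_ * _); apply: eq_bigr => k /negbTE -> //.
Qed.

Lemma multilin m (T : tensor m) v j a b x y :
  tens_eval T (upd v j (a *: x + b *: y)) =
  a * tens_eval T (upd v j x) + b * tens_eval T (upd v j y).
Proof.
rewrite !tens_upd !mulr_sumr -big_split /=; apply: eq_bigr => s _; rewrite !mxE; ring.
Qed.

Lemma upd_id m (T : tensor m) v j : tens_eval T (upd v j (v j)) = tens_eval T v.
Proof.
apply: eq_bigr => s _; congr (_ * _); apply: eq_bigr => k _; rewrite /upd.
by case: eqP => [->|].
Qed.

Lemma tens_basis m (T : tensor m) (s : multi_index m) :
  tens_eval T (fun k => delta_mx 0 (s k)) = T s.
Proof.
rewrite /tens_eval (bigD1 s) //=.
rewrite big1 ?mulr1; last by move=> k _; rewrite mxE !eqxx.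
rewrite big1 ?addr0 //.
move=> s' ns; have [k Hk] : exists k, s' k != s k.
  apply: NNPP => N; move/eqP: ns; apply; apply/ffunP => k.
  by apply: NNPP => N2; apply: N; exists k; apply/eqP.
by rewrite (bigD1 k) //= mxE (negbTE Hk) andbF mul0r mulr0.
Qed.

Lemma tens0 m (T : tensor m) : (forall v, tens_eval T v = 0) -> T = 0.
Proof. by move=> H; apply/ffunP => s; rewrite ffunE -tens_basis H. Qed.

Lemma sigma_upd m j u (T : tensor m) : inSigma0 j u T -> forall v, tens_eval T (upd v j u) = 0.
Proof. by move=> H v; apply: H; exists 1; rewrite /upd eqxx scale1r. Qed.

Lemma phi_eval m (B : 'I_m.+1 -> tensor m) x v :
  tens_eval (phi_map B x) v = \sum_(k < m.+1) x 0 k * tens_eval (B k) v.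
Proof.
rewrite /tens_eval /phi_map.
under eq_bigr do rewrite sum_ffunE mulr_suml.
rewrite exchange_big /=; apply: eq_bigr => k _; rewrite mulr_sumr.
by apply: eq_bigr => s _; rewrite ffunE mulrA.
Qed.

Lemma hform_scale d (g : 'I_d.+1 -> CC) c u : hform g (c *: u) = c ^+ d * hform g u.
Proof.
rewrite /hform mulr_sumr; apply: eq_bigr => k _; rewrite !mxE !exprMn.
have Hk : (k <= d)%N by rewrite -ltnS ltn_ord.
have -> : c ^+ d = c ^+ k * c ^+ (d - k) by rewrite -exprD subnKC.
ring.
Qed.

Lemma hvec_scale n d (f : 'I_n -> 'I_d.+1 -> CC) c u : hvec f (c *: u) = c ^+ d *: hvec f u.
Proof. by apply/rowP => k; rewrite !mxE hform_scale. Qed.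

Definition linpoly (a b : CC) : {poly CC} := a%:P + b%:P * 'X.
Definition hformP d (g : 'I_d.+1 -> CC) (P0 P1 : {poly CC}) : {poly CC} :=
  \sum_(k < d.+1) (g k)%:P * P0 ^+ k * P1 ^+ (d - k).

Lemma hform_line d (g : 'I_d.+1 -> CC) (p w : 'rV[CC]_2) t :
  hform g (p + t *: w) =
  (hformP g (linpoly (p 0 0) (w 0 0)) (linpoly (p 0 1) (w 0 1))).[t].
Proof.
rewrite /hformP horner_sum; apply: eq_bigr => k _.
by rewrite !mxE /linpoly !hornerE !(mulrC t).
Qed.

Definition CFP (P : 'rV[CC]_2 -> Prop) := exists zs : seq 'rV[CC]_2,
  forall u, u != 0 -> (forall z, z \in zs -> ~ same_point z u) -> P u.

Lemma CFP_and P Q : CFP P -> CFP Q -> CFP (fun u => P u /\ Q u).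
Proof.
move=> [z1 H1] [z2 H2]; exists (z1 ++ z2) => u un0 H; split.
  by apply: H1 => // z Hz; apply: H; rewrite mem_cat Hz.
by apply: H2 => // z Hz; apply: H; rewrite mem_cat Hz orbT.
Qed.

Lemma CFP_mono (P Q : 'rV[CC]_2 -> Prop) : (forall u, u != 0 -> P u -> Q u) -> CFP P -> CFP Q.
Proof. by move=> H [z Hz]; exists z => u un0 N; apply: H => //; apply: Hz. Qed.

Lemma lin_ne0 (p w : 'rV[CC]_2) t : det2 p w != 0 -> p + t *: w != 0.
Proof.
move=> D; apply/negP => /eqP E.
have [] := indep D (_ : 1 *: p + t *: w = 0); first by rewrite scale1r.
by move/eqP; rewrite oner_eq0.
Qed.

Lemma w_ne0 (p w : 'rV[CC]_2) : det2 p w != 0 -> w != 0.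
Proof.
move=> D; apply/negP => /eqP w0; move: D; by rewrite /det2 w0 !mxE !mulr0 subrr eqxx.
Qed.

Lemma uniq_t (p w : 'rV[CC]_2) t1 t2 : det2 p w != 0 ->
  same_point (p + t1 *: w) (p + t2 *: w) -> t1 = t2.
Proof.
move=> D [_ [c [cn0 E]]].
have : (1 - c) *: p + (t2 - c * t1) *: w = 0.
  have -> : (1 - c) *: p + (t2 - c * t1) *: w = (p + t2 *: w) - c *: (p + t1 *: w).
    by apply: row2_eq; rewrite !mxE; ring.
  by rewrite E subrr.
move/(indep D) => [h1 h2].
have c1 : c = 1 by apply/eqP; rewrite eq_sym -subr_eq0 h1.
by apply/eqP; rewrite eq_sym -subr_eq0; move: h2; rewrite c1 mul1r => ->.
Qed.

Lemma line_cof P (p w : 'rV[CC]_2) : CFP P -> det2 p w != 0 ->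
  exists s : seq CC, forall t, t \notin s -> P (p + t *: w).
Proof.
move=> [zs Hzs] D.
suff [s Hs] : exists s : seq CC, forall t, t \notin s ->
    forall z, z \in zs -> ~ same_point z (p + t *: w).
  by exists s => t Ht; apply: Hzs; [apply: lin_ne0 | apply: Hs].
elim: zs {Hzs} => [|z zs [s Hs]]; first by exists [::].
case: (classic (exists t0, same_point z (p + t0 *: w))) => [[t0 H0]|N].
  exists (t0 :: s) => t; rewrite inE negb_or => /andP[Ht0 Hts] z'; rewrite inE => /orP[/eqP ->|Hz'].
    move=> H1; move/eqP: Ht0; apply; apply: (uniq_t D).
    exact: sp_trans (sp_sym H1) H0.
  by apply: Hs.
exists s => t Hts z'; rewrite inE => /orP[/eqP ->|Hz'].
  by move=> H1; apply: N; exists t.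
by apply: Hs.
Qed.

Lemma poly_roots_list (q : {poly CC}) : q != 0 -> exists rs : seq CC, forall t, root q t -> t \in rs.
Proof.
move=> qn0; have [rs Hrs] := closed_field_poly_normal q.
by exists rs => t; rewrite Hrs rootZ ?root_prod_XsubC // lead_coef_eq0.
Qed.

Lemma hform_CFP d (g : 'I_d.+1 -> CC) (p : 'rV[CC]_2) : p != 0 -> hform g p != 0 ->
  CFP (fun u => hform g u != 0).
Proof.
move=> pn0 gp.
have [w D] := exists_indep pn0.
pose gg := hformP g (linpoly (p 0 0) (w 0 0)) (linpoly (p 0 1) (w 0 1)).
have ggE t : hform g (p + t *: w) = gg.[t] by rewrite hform_line.
have ggn0 : gg != 0.
  apply/negP => /eqP g0; move: gp; by rewrite -[p]addr0 -(scale0r w) ggE g0 horner0 eqxx.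
have [rs Hrs] := poly_roots_list ggn0.
exists (w :: map (fun r => p + r *: w) rs) => u un0 Hz.
apply/negP => /eqP H0.
have E := decomp D u; set a := det2 u w / det2 p w in E; set b := det2 p u / det2 p w in E.
case: (eqVneq a 0) => [a0|an0].
  have bn0 : b != 0 by apply/negP => /eqP b0; move: un0; rewrite E a0 b0 !scale0r addr0 eqxx.
  apply: (Hz w); first by rewrite inE eqxx.
  rewrite E a0 scale0r add0r; exact: sp_scale (w_ne0 D) bn0.
have E2 : u = a *: (p + (b / a) *: w) by rewrite scalerDr scalerA mulrCA mulfV // mulr1.
apply: (Hz (p + (b / a) *: w)).
  by rewrite inE; apply/orP; right; apply: map_f; apply: Hrs; rewrite /root -ggE -(mulrI_eq0 _ (lregP (expf_neq0 d an0))) -hform_scale -E2 H0.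
rewrite {1}E2; apply: sp_scale => //; exact: lin_ne0.
Qed.

Lemma reg_ne0 n (psi : 'rV[CC]_2 -> 'rV[CC]_n) u : regular_P1 psi -> u != 0 -> psi u != 0.
Proof.
move=> R un0; have [d [f [e [g [G L]]]]] := R u un0.
have [_ S] := L u un0 G; exact: sp_neq0r S.
Qed.

Lemma reg_scale n (psi : 'rV[CC]_2 -> 'rV[CC]_n) u c : regular_P1 psi -> u != 0 -> c != 0 ->
  same_point (psi u) (psi (c *: u)).
Proof.
move=> R un0 cn0; have [d [f [e [g [G L]]]]] := R u un0.
have cun0 : c *: u != 0 by rewrite scaler_eq0 negb_or cn0.
have Gc : hform g (c *: u) != 0 by rewrite hform_scale mulf_neq0 // expf_neq0.
have [h1 S1] := L u un0 G; have [_ S2] := L _ cun0 Gc.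
apply: sp_trans (sp_sym S1) _; apply: sp_trans S2.
rewrite hvec_scale; apply: sp_scale => //; exact: expf_neq0.
Qed.

Lemma mulmx_unit_ne0 (A : 'M[CC]_2) (u : 'rV[CC]_2) : A \in unitmx -> u != 0 -> u *m A != 0.
Proof.
move=> uA un0; apply/negP => /eqP E; move/eqP: un0; apply.
by rewrite -(mulmxK uA u) E mul0mx.
Qed.

Lemma reg_ext n (psi1 psi2 : 'rV[CC]_2 -> 'rV[CC]_n) (A : 'M[CC]_2) :
  regular_P1 psi1 -> regular_P1 psi2 -> A \in unitmx ->
  CFP (fun u => same_point (psi1 u) (psi2 (u *m A))) ->
  forall u, u != 0 -> same_point (psi1 u) (psi2 (u *m A)).
Proof.
move=> R1 R2 uA CF p pn0.
have pAn0 := mulmx_unit_ne0 uA pn0.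
have [d1 [f1 [e1 [g1 [G1 L1]]]]] := R1 p pn0.
have [d2 [f2 [e2 [g2 [G2 L2]]]]] := R2 _ pAn0.
have [w Dw] := exists_indep pn0.
have [s Hs] := line_cof CF Dw.
pose q := p *m A; pose r := w *m A.
pose l1 := linpoly (p 0 0) (w 0 0); pose l2 := linpoly (p 0 1) (w 0 1).
pose k1 := linpoly (q 0 0) (r 0 0); pose k2 := linpoly (q 0 1) (r 0 1).
have LA t : (p + t *: w) *m A = q + t *: r by rewrite mulmxDl -scalemxAl.
pose gg1 := hformP g1 l1 l2; pose gg2 := hformP g2 k1 k2.
pose F a := hformP (f1 a) l1 l2; pose G a := hformP (f2 a) k1 k2.
have at0 (x : 'rV[CC]_2) y : x + 0 *: y = x by rewrite scale0r addr0.
have gg1n0 : gg1 != 0.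
  apply/negP => /eqP g0; move: G1; by rewrite -(at0 p w) hform_line -/l1 -/l2 -/gg1 g0 horner0 eqxx.
have gg2n0 : gg2 != 0.
  apply/negP => /eqP g0; move: G2; by rewrite -/q -(at0 q r) hform_line -/k1 -/k2 -/gg2 g0 horner0 eqxx.
have key a b : F a * G b - F b * G a = 0.
  apply/eqP/negPn/negP => Mn0.
  pose Q := (F a * G b - F b * G a) * gg1 * gg2.
  have Qn0 : Q != 0 by rewrite !mulf_neq0.
  have [rs Hrs] := poly_roots_list Qn0.
  have [t Ht] := avoid (s ++ rs).
  move: Ht; rewrite mem_cat negb_or => /andP[Hts Htr].
  have nQ : ~~ root Q t by apply/negP => /Hrs; apply/negP.
  move: nQ; rewrite /root /Q !hornerM !mulf_eq0 !negb_or => /andP[/andP[HM H1] H2].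
  set u := p + t *: w.
  have un0 : u != 0 by apply: lin_ne0.
  have uAn0 := mulmx_unit_ne0 uA un0.
  have G1' : hform g1 u != 0 by rewrite /u hform_line.
  have G2' : hform g2 (u *m A) != 0 by rewrite /u LA hform_line.
  have [_ S1] := L1 u un0 G1'; have [_ S2] := L2 _ uAn0 G2'.
  have S := sp_trans S1 (sp_trans (Hs t Hts) (sp_sym S2)).
  have := sp_minor S a b; rewrite !mxE /u LA !hform_line -/l1 -/l2 -/k1 -/k2.
  move=> E; move: HM; by rewrite hornerD hornerN !hornerM -/(F a) E subrr eqxx.
have S1 := (L1 p pn0 G1).2; have S2 := (L2 _ pAn0 G2).2.
apply: sp_trans (sp_sym S1) _; apply: (sp_trans _ S2).
apply: minor_sp; [exact: (L1 p pn0 G1).1 | exact: (L2 _ pAn0 G2).1 |] => a b.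
rewrite !mxE -/q -(at0 q r) -(at0 p w) !hform_line.
have := key a b; move/(congr1 (fun P => P.[0])).
rewrite hornerD hornerN !hornerM horner0 => /eqP; rewrite subr_eq0 => /eqP.
by rewrite /F /G -!hform_line.
Qed.

Definition Gprop m (B : 'I_m.+1 -> tensor m) (i : 'I_m) (psi : 'rV[CC]_2 -> 'rV[CC]_m.+1) u :=
  forall x : 'rV[CC]_m.+1, inSigma0 i u (phi_map B x) <-> exists c : CC, x = c *: psi u.

Lemma inj_gen m (B : 'I_m.+1 -> tensor m) i psi u1 u2 :
  (forall x, phi_map B x = 0 -> x = 0) ->
  Gprop B i psi u1 -> Gprop B i psi u2 -> u1 != 0 -> u2 != 0 ->
  same_point (psi u1) (psi u2) -> same_point u1 u2.
Proof.
move=> inj G1 G2 u1n0 u2n0 S; apply: NNPP => N.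
have D : det2 u1 u2 != 0 by apply/negP => /eqP D; apply: N; apply: det_sp.
have xn0 := sp_neq0l S.
move: S => [_ [c [cn0 E]]].
have H1 : inSigma0 i u1 (phi_map B (psi u1)) by apply/G1; exists 1; rewrite scale1r.
have H2 : inSigma0 i u2 (phi_map B (psi u1)).
  by apply/G2; exists c^-1; rewrite E scalerA mulVf // scale1r.
move/eqP: xn0; apply; apply: inj; apply: tens0 => v.
rewrite -(upd_id _ _ i) (decomp D (v i)) multilin (sigma_upd H1) (sigma_upd H2).
by rewrite !mulr0 addr0.
Qed.


Definition e0v : 'rV[CC]_2 := \row_(k < 2) (k == 0)%:R.
Definition e1v : 'rV[CC]_2 := \row_(k < 2) (k == 1)%:R.
Lemma e0v0 : e0v 0 0 = 1. Proof. by rewrite mxE. Qed.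
Lemma e0v1 : e0v 0 1 = 0. Proof. by rewrite mxE. Qed.
Lemma e1v0 : e1v 0 0 = 0. Proof. by rewrite mxE. Qed.
Lemma e1v1 : e1v 0 1 = 1. Proof. by rewrite mxE. Qed.
Lemma e0vn0 : e0v != 0.
Proof. apply/negP => /eqP E; have := e0v0; rewrite E mxE => /eqP; by rewrite eq_sym oner_eq0. Qed.
Lemma e1vn0 : e1v != 0.
Proof. apply/negP => /eqP E; have := e1v1; rewrite E mxE => /eqP; by rewrite eq_sym oner_eq0. Qed.
Lemma det_e : det2 e0v e1v != 0.
Proof. by rewrite /det2 e0v0 e0v1 e1v0 e1v1 mulr1 mulr0 subr0 oner_eq0. Qed.
Lemma xdec (x : 'rV[CC]_2) : x = x 0 0 *: e0v + x 0 1 *: e1v.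
Proof. apply: row2_eq; rewrite !mxE /=; ring. Qed.
Lemma xdec' (x : 'rV[CC]_2) : x = x 0 0 *: e0v + x 0 1 *: e1v.
Proof. exact: xdec. Qed.

Lemma forward m (B : 'I_m.+1 -> tensor m) (i j : 'I_m) psi_i psi_j :
  (forall x, phi_map B x = 0 -> x = 0) ->
  regular_P1 psi_i -> regular_P1 psi_j ->
  (exists ei (gi : 'I_ei.+1 -> CC), (exists u, u != 0 /\ hform gi u != 0) /\
     forall u, u != 0 -> hform gi u != 0 -> Gprop B i psi_i u) ->
  (exists ej (gj : 'I_ej.+1 -> CC), (exists u, u != 0 /\ hform gj u != 0) /\
     forall u, u != 0 -> hform gj u != 0 -> Gprop B j psi_j u) ->
  (forall u, u != 0 -> exists u', u' != 0 /\ same_point (psi_i u) (psi_j u')) ->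
  exists A : 'M[CC]_2, A \in unitmx /\
    forall u, u != 0 -> same_point (psi_i u) (psi_j (u *m A)).
Proof.
move=> inj Ri Rj [ei [gi [[pi [pin0 gipi]] Gi]]] [ej [gj [[pj [pjn0 gjpj]] Gj]]] SI.
have CFi := hform_CFP pin0 gipi.
have injI u1 u2 : u1 != 0 -> u2 != 0 -> hform gi u1 != 0 -> hform gi u2 != 0 ->
    same_point (psi_i u1) (psi_i u2) -> same_point u1 u2.
  move=> h1 h2 h3 h4; apply: (inj_gen inj (Gi _ h1 h3) (Gi _ h2 h4)) => //.
have [zsj Hzsj] := hform_CFP pjn0 gjpj.
have C3 : CFP (fun u => hform gi u != 0 -> forall z, z \in zsj -> ~ same_point (psi_i u) (psi_j z)).
  elim: (zsj) => [|z zs [zs' H]]; first by exists [::].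
  case: (classic (exists u0, u0 != 0 /\ hform gi u0 != 0 /\ same_point (psi_i u0) (psi_j z))) =>
    [[u0 [u0n0 [g0 S0]]]|N].
    exists (u0 :: zs') => u un0 Hu gu z'; rewrite inE => /orP[/eqP ->|Hz'].
      move=> S; apply: (Hu u0); first by rewrite inE eqxx.
      apply: injI => //; exact: sp_trans S0 (sp_sym S).
    apply: H => //; move=> z0 Hz0; apply: Hu; by rewrite inE Hz0 orbT.
  exists zs' => u un0 Hu gu z'; rewrite inE => /orP[/eqP ->|Hz'].
    by move=> S; apply: N; exists u.
  by apply: H.
have Gjgood u u' : u != 0 ->
    (hform gi u != 0 -> forall z, z \in zsj -> ~ same_point (psi_i u) (psi_j z)) ->
    hform gi u != 0 -> u' != 0 -> same_point (psi_i u) (psi_j u') -> hform gj u' != 0.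
  move=> un0 H gu u'n0 S; apply: NNPP => N'.
  have [z [Hz Sz]] : exists z, z \in zsj /\ same_point z u'.
    apply: NNPP => N2; apply: N'; apply: Hzsj => // z Hz Sz; apply: N2; by exists z.
  apply: (H gu z Hz); apply: sp_trans S _.
  move: Sz => [zn0 [c [cn0 E]]]; rewrite E; apply: sp_sym; exact: reg_scale.
have [d [f [e [g [G0 Lf]]]]] := Ri e0v e0vn0.
have CF2 := hform_CFP e0vn0 G0.
have CFall := CFP_and CFi (CFP_and CF2 C3).
have [s0 Hs0] := line_cof CFall det_e.
pose L t := e0v + t *: e1v.
have Ln0 t : L t != 0 by apply: lin_ne0; exact: det_e.
pose l1 := linpoly (e0v 0 0) (e1v 0 0); pose l2 := linpoly (e0v 0 1) (e1v 0 1).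
pose PX k := hformP (f k) l1 l2.
have hvL t k : hvec f (L t) 0 k = (PX k).[t] by rewrite mxE hform_line.
have [ts Hts] := avoid s0.
have [g1s [g2s g3s]] := Hs0 ts Hts.
have hvs := (Lf (L ts) (Ln0 ts) g2s).1.
pose Ts := phi_map B (hvec f (L ts)).
have Tsn0 : Ts != 0 by apply/negP => /eqP /inj E; move: hvs; rewrite E eqxx.
have [vs Hvs] : exists v, tens_eval Ts v != 0.
  apply: NNPP => N; move/eqP: Tsn0; apply; apply: tens0 => v; apply/eqP; apply: NNPP => N2.
  by apply: N; exists v; apply/negP.
pose aT T := tens_eval T (upd vs j e0v); pose bT T := tens_eval T (upd vs j e1v).
have contr T x : tens_eval T (upd vs j x) = x 0 0 * aT T + x 0 1 * bT T.
  by rewrite {1}(xdec x) multilin.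
have ab0 : (aT Ts != 0) || (bT Ts != 0).
  apply/negPn/negP => /norP[/negPn/eqP a0 /negPn/eqP b0]; move/eqP: Hvs; apply.
  by rewrite -(upd_id _ _ j) contr a0 b0 !mulr0 addr0.
pose pa := \sum_(k < m.+1) PX k * (aT (B k))%:P.
pose pb := \sum_(k < m.+1) PX k * (bT (B k))%:P.
have paE t : aT (phi_map B (hvec f (L t))) = pa.[t].
  by rewrite /aT phi_eval /pa horner_sum; apply: eq_bigr => k _; rewrite hornerM hornerC hvL.
have pbE t : bT (phi_map B (hvec f (L t))) = pb.[t].
  by rewrite /bT phi_eval /pb horner_sum; apply: eq_bigr => k _; rewrite hornerM hornerC hvL.
have pab : (pa != 0) || (pb != 0).
  case/orP: ab0 => H; apply/orP; [left|right]; apply/negP => /eqP p0; move: H.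
    by rewrite /Ts paE p0 horner0 eqxx.
  by rewrite /Ts pbE p0 horner0 eqxx.
pose gc := gcdp pa pb.
have gcn0 : gc != 0 by rewrite gcdp_eq0 negb_and.
pose a' := pa %/ gc; pose b' := pb %/ gc.
have cop : coprimep a' b' := coprimep_div_gcd pab.
have paF : pa = a' * gc := esym (divpK (dvdp_gcdl pa pb)).
have pbF : pb = b' * gc := esym (divpK (dvdp_gcdr pa pb)).
have [rg Hrg] := poly_roots_list gcn0.
pose s1 := s0 ++ rg.
pose Phi t : 'rV[CC]_2 := \row_(k < 2) (if k == 0 then b'.[t] else - a'.[t]).
have Phi0 t : Phi t 0 0 = b'.[t] by rewrite mxE.
have Phi1 t : Phi t 0 1 = - a'.[t] by rewrite mxE.
have Phin0 t : Phi t != 0.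
  apply/negP => /eqP P0.
  have h0 : b'.[t] = 0 by rewrite -Phi0 P0 mxE.
  have h1 : a'.[t] = 0 by apply/eqP; rewrite -oppr_eq0 -Phi1 P0 mxE.
  have r : root a' t by rewrite /root h1.
  by move: (coprimep_root cop r); rewrite h0 eqxx.
have mainL t : t \notin s1 -> same_point (psi_i (L t)) (psi_j (Phi t)).
  rewrite mem_cat negb_or => /andP[t0 tg].
  have [g1 [g2 g3]] := Hs0 t t0.
  have [u' [u'n0 S]] := SI (L t) (Ln0 t).
  have gu' := Gjgood _ _ (Ln0 t) g3 g1 u'n0 S.
  have [hn0 Sf] := Lf (L t) (Ln0 t) g2.
  have Sf' := sp_trans Sf S.
  have Hsig : inSigma0 j u' (phi_map B (hvec f (L t))).
    apply/(Gj u' u'n0 gu'); move: Sf' => [_ [c [cn0 E]]]; exists c^-1.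
    by rewrite E scalerA mulVf // scale1r.
  have E0 := sigma_upd Hsig vs.
  rewrite contr paE pbE paF pbF !hornerM in E0.
  have gct : gc.[t] != 0.
    apply/negP => /eqP r0; move/negP: tg; apply; apply: Hrg; by rewrite /root r0.
  have E1 : u' 0 0 * a'.[t] + u' 0 1 * b'.[t] = 0.
    apply/(mulIf gct); rewrite mul0r -E0; ring.
  have Sp : same_point (Phi t) u'.
    apply: det_sp => //; rewrite /det2 Phi0 Phi1.
    by transitivity (u' 0 0 * a'.[t] + u' 0 1 * b'.[t]); [ring | exact: E1].
  move: Sp => [_ [c [cn0 Ec]]].
  apply: sp_trans S _; rewrite Ec; apply: sp_sym; exact: reg_scale.
have injPhi t1 t2 : t1 \notin s1 -> t2 \notin s1 ->
    a'.[t1] * b'.[t2] = a'.[t2] * b'.[t1] -> t1 = t2.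
  move=> H1 H2 E.
  have Sp : same_point (Phi t1) (Phi t2).
    apply: det_sp => //; rewrite /det2 !Phi0 !Phi1.
    by transitivity (a'.[t1] * b'.[t2] - a'.[t2] * b'.[t1]); [ring | rewrite E subrr].
  have Sj : same_point (psi_j (Phi t1)) (psi_j (Phi t2)).
    by move: Sp => [_ [c [cn0 ->]]]; apply: reg_scale.
  have S := sp_trans (mainL _ H1) (sp_trans Sj (sp_sym (mainL _ H2))).
  move: H1 H2; rewrite !mem_cat !negb_or => /andP[H1 _] /andP[H2 _].
  have [g1a _] := Hs0 _ H1; have [g1b _] := Hs0 _ H2.
  apply: (uniq_t det_e); exact: injI (Ln0 _) (Ln0 _) g1a g1b S.
have [sa [sb dn0]] := deg_lemma cop injPhi.
pose A : 'M[CC]_2 := \matrix_(r < 2, c < 2)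
  (if r == 0 then (if c == 0 then b'`_0 else - a'`_0)
   else (if c == 0 then b'`_1 else - a'`_1)).
pose Ai : 'M[CC]_2 := \matrix_(r < 2, c < 2)
  ((if r == 0 then (if c == 0 then - a'`_1 else a'`_0)
   else (if c == 0 then - b'`_1 else b'`_0)) / (a'`_0 * b'`_1 - a'`_1 * b'`_0)).
have uA : A \in unitmx.
  have : A *m Ai = 1%:M.
    apply/matrixP => r c; rewrite !mxE !big_ord_recr big_ord0 /= !mxE.
    by case: (ord2_cases r) => ->; case: (ord2_cases c) => -> /=; field.
  by case/mulmx1_unit.
have LA t : L t *m A = Phi t.
  apply: row2_eq; rewrite ?Phi0 ?Phi1 ?(horner_coef_wide _ sa) ?(horner_coef_wide _ sb)
    !big_ord_recr !big_ord0 !mxE !big_ord_recr !big_ord0 /= !mxE /=; ring.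
have CFfin : CFP (fun u => same_point (psi_i u) (psi_j (u *m A))).
  exists (e1v :: map L s1) => u un0 Hz.
  have u0 : u 0 0 != 0.
    apply/negP => /eqP u00; apply: (Hz e1v); first by rewrite inE eqxx.
    have Eu : u = u 0 1 *: e1v by rewrite {1}(xdec u) u00 scale0r add0r.
    have u1 : u 0 1 != 0 by apply/negP => /eqP u1; move: un0; rewrite Eu u1 scale0r eqxx.
    rewrite [X in same_point _ X]Eu; exact: sp_scale e1vn0 u1.
  pose t := u 0 1 / u 0 0.
  have Eu : u = u 0 0 *: L t.
    apply: row2_eq; rewrite !mxE /= /t; field; done.
  have ts' : t \notin s1.
    apply/negP => Ht; apply: (Hz (L t)); first by rewrite inE map_f ?orbT.
    rewrite [X in same_point _ X]Eu; exact: sp_scale (Ln0 t) u0.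
  have M := mainL t ts'; rewrite -LA in M.
  rewrite Eu.
  apply: sp_trans (sp_sym (reg_scale Ri (Ln0 t) u0)) _.
  rewrite -scalemxAl; apply: sp_trans M (reg_scale Rj (mulmx_unit_ne0 uA (Ln0 t)) u0).
exists A; split => //; exact: reg_ext Ri Rj uA CFfin.
Qed.

Unset Implicit Arguments.

Theorem lemma2p12 (m : nat) (B : 'I_m.+1 -> tensor m) (i j : 'I_m)
    (psi_i psi_j : 'rV[CC]_2 -> 'rV[CC]_m.+1) :
  factorization_structure B ->
  factorization_curve B i psi_i ->
  factorization_curve B j psi_j ->
  (same_image psi_i psi_j <->
   exists A : 'M[CC]_2, A \in unitmx /\
     forall u : 'rV[CC]_2, u != 0 -> same_point (psi_i u) (psi_j (u *m A))).
Proof.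
move=> [inj _] [Ri Gi] [Rj Gj]; split.
  move=> [SI1 _]; exact: forward inj Ri Rj Gi Gj SI1.
move=> [A [uA H]]; split.
  move=> u un0; exists (u *m A); split; [exact: mulmx_unit_ne0 | exact: H].
move=> u' u'n0; exists (u' *m invmx A); split.
  by apply: mulmx_unit_ne0 => //; rewrite unitmx_inv.
rewrite -[X in psi_j X](mulmxKV uA u').
by apply: H; apply: mulmx_unit_ne0 => //; rewrite unitmx_inv.
Qed.
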